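(* Let $\Bbbk$ be a field, $X$ the generic symmetric $n\times n$ matrix, and for $i=1,\dots,n$ let $d_i$ be the determinant of the $i\times i$ submatrix of $X$ in the bottom-left corner (rows $n-i+1,\dots,n$ and columns $1,\dots,i$). Put $\mathfrak{D}=d_1d_2\cdots d_n\in\Bbbk[X]$. With respect to the lexicographic monomial order on $\Bbbk[X]$ induced by the variable order $x_{11}>x_{12}>\cdots>x_{1n}>x_{22}>x_{23}>\cdots>x_{2n}>\cdots>x_{n-1,n}>x_{nn}$ (i.e. $x_{ij}>x_{kl}$ iff $(i,j)$ precedes $(k,l)$ lexicographically, $i\le j$, $k\le l$), the leading term of $\mathfrak{D}$ is $\prod_{1\le i\le j\le n}x_{ij}$. In particular, if $\operatorname{char}\Bbbk=p>0$, then $\mathfrak{D}^{p-1}\notin\mathfrak{m}_S^{[p]}$, where $\mathfrak{m}_S=(x_{ij}\mid 1\le i\le j\le n)$.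
   Context: $X=(x_{ij})$ is the symmetric $n\times n$ matrix whose entries are independent indeterminates subject only to $x_{ij}=x_{ji}$; $S=\Bbbk[X]=\Bbbk[x_{ij}\mid 1\le i\le j\le n]$. For an ideal $J$ in characteristic $p$, $J^{[p]}$ denotes the ideal generated by $p$-th powers of elements of $J$. *)

(* Defs.v *)
From HB Require Import structures.
From mathcomp Require Import all_boot all_order all_algebra.
From mathcomp Require Import zify.
From mathcomp.multinomials Require Import mpoly.
Set Implicit Arguments. Unset Strict Implicit. Unset Printing Implicit Defensive.
Import Order.TTheory GRing.Theory.
Local Open Scope ring_scope.

(* Index set of the variables x_ij, 1 <= i <= j <= n (0-based here). *)
Definition sidx (n : nat) := {p : 'I_n * 'I_n | (p.1 <= p.2)%N}.

Definition nvars (n : nat) : nat := #|{: sidx n}|.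

(* The (abstract) polynomial ring S = k[x_ij | i <= j]: the variables are
   numbered bijectively by [enum_rank]; the monomial order below is defined
   directly in terms of the pairs (i,j), independently of this numbering. *)
Definition varS (K : fieldType) (n : nat) (t : sidx n) : {mpoly K[nvars n]} :=
  'X_(enum_rank t).

Lemma sym_pair_aux (i j : nat) : ~~ (i <= j)%N -> (j <= i)%N.
Proof. by move=> h; rewrite ltnW // ltnNge. Qed.

Definition sym_pair (n : nat) (i j : 'I_n) : sidx n :=
  match boolP (i <= j)%N with
  | AltTrue h => exist (fun p : 'I_n * 'I_n => (p.1 <= p.2)%N) (i, j) h
  | AltFalse h => exist (fun p : 'I_n * 'I_n => (p.1 <= p.2)%N) (j, i) (sym_pair_aux h)
  end.

Definition genSym (K : fieldType) (n : nat) : 'M[{mpoly K[nvars n]}]_n :=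
  \matrix_(i, j) varS K (sym_pair i j).

Lemma corner_row_aux (n : nat) (k : 'I_n) (r : 'I_k.+1) : (n.-1 - k + r < n)%N.
Proof. case: k r => k hk [r /= hr]; rewrite -subn1; move: hk hr; lia. Qed.

(* d_{k+1} : the determinant of the (k+1) x (k+1) bottom-left submatrix of X,
   rows n-k..n and columns 1..k+1 (1-based), for k = 0..n-1. *)
Definition corner_minor (K : fieldType) (n : nat) (k : 'I_n) : {mpoly K[nvars n]} :=
  \det (\matrix_(r < k.+1, c < k.+1)
          genSym K n (Ordinal (corner_row_aux r)) (widen_ord (ltn_ord k) c)).

Definition frakD (K : fieldType) (n : nat) : {mpoly K[nvars n]} :=
  \prod_(k < n) corner_minor K k.

Local Close Scope ring_scope.
Definition pair_prec (n : nat) (s t : sidx n) : bool :=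
  ((val s).1 < (val t).1)%N ||
  (((val s).1 == (val t).1) && ((val s).2 < (val t).2)%N).

Definition expo (n : nat) (m : 'X_{1..nvars n}) (t : sidx n) : nat := m (enum_rank t).

(* Lex monomial order induced by x_11 > x_12 > ... > x_1n > x_22 > ... > x_nn:
   m1 < m2 iff at the first variable (largest) where they differ,
   m1 has the smaller exponent. *)
Definition lex_lt (n : nat) (m1 m2 : 'X_{1..nvars n}) : Prop :=
  exists t : sidx n,
    (forall s : sidx n, pair_prec s t -> expo m1 s = expo m2 s) /\
    (expo m1 t < expo m2 t)%N.

Local Open Scope ring_scope.
Definition is_lex_leading_term (K : fieldType) (n : nat)
    (p q : {mpoly K[nvars n]}) : Prop :=
  exists m : 'X_{1..nvars n},
    [/\ m \in msupp p,
        (forall m', m' \in msupp p -> m' != m -> lex_lt m' m) &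
        q = p@_m *: 'X_[m]].

Definition in_ideal (R : comRingType) (G : R -> Prop) (f : R) : Prop :=
  exists (k : nat) (a g : 'I_k -> R),
    (forall i, G (g i)) /\ f = \sum_(i < k) a i * g i.

Definition frob_power (R : comRingType) (J : R -> Prop) (p : nat) : R -> Prop :=
  in_ideal (fun g => exists h, J h /\ g = h ^+ p).

Definition max_ideal (K : fieldType) (n : nat) : {mpoly K[nvars n]} -> Prop :=
  in_ideal (fun g => exists t : sidx n, g = varS K t).

Arguments varS K {n} t.
Arguments frakD K n.
Arguments max_ideal : clear implicits.

(* Main.v *)
Require Import Defs.
From HB Require Import structures.
From mathcomp Require Import all_boot all_order all_algebra.
From mathcomp Require Import zify fingroup perm.
From mathcomp.multinomials Require Import mpoly.
Import GRing.Theory.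

Section S1.
Set Implicit Arguments. Unset Strict Implicit. Unset Printing Implicit Defensive.

Lemma sidx_eqE n (s t : sidx n) :
  (s == t) = (((val s).1 : nat) == (val t).1) && (((val s).2 : nat) == (val t).2).
Proof.
case: s => [[a b] h]; case: t => [[c d] h'] /=.
apply/idP/idP.
  by move/eqP => [-> ->]; rewrite !eqxx.
move=> /andP [/eqP e1 /eqP e2].
have ea : a = c by apply: val_inj.
have eb : b = d by apply: val_inj.
subst; apply/eqP; congr exist; exact: bool_irrelevance.
Qed.

Lemma prec_trans n (s t u : sidx n) : pair_prec s t -> pair_prec t u -> pair_prec s u.
Proof. rewrite /pair_prec -!val_eqE /=; lia. Qed.

Lemma prec_irr n (s : sidx n) : ~~ pair_prec s s.
Proof. by rewrite /pair_prec !ltnn eqxx. Qed.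

Lemma prec_total n (s t : sidx n) : s != t -> pair_prec s t || pair_prec t s.
Proof. rewrite sidx_eqE /pair_prec -!val_eqE /=; lia. Qed.

Lemma lex_irr n (m : 'X_{1..nvars n}) : ~ lex_lt m m.
Proof. by case=> t [_]; rewrite ltnn. Qed.

Lemma lex_trans n (a b c : 'X_{1..nvars n}) : lex_lt a b -> lex_lt b c -> lex_lt a c.
Proof.
move=> [t1 [h1 l1]] [t2 [h2 l2]].
case: (eqVneq t1 t2) => [e|ne].
  subst t2; exists t1; split; last exact: ltn_trans l1 l2.
  by move=> s hs; rewrite h1 // h2.
case/orP: (prec_total ne) => hp.
  exists t1; split; last by rewrite -(h2 _ hp).
  by move=> s hs; rewrite h1 // h2 //; exact: prec_trans hs hp.
exists t2; split; last by rewrite (h1 _ hp).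
by move=> s hs; rewrite h1 ?h2 //; exact: prec_trans hs hp.
Qed.

Lemma lex_addr n (a b c : 'X_{1..nvars n}) : lex_lt a b -> lex_lt (a + c)%MM (b + c)%MM.
Proof.
move=> [t [h l]]; exists t; split.
  by move=> s hs; rewrite /expo !mnmDE; have := h s hs; rewrite /expo => ->.
by rewrite /expo !mnmDE ltn_add2r.
Qed.

Lemma lex_addl n (a b c : 'X_{1..nvars n}) : lex_lt a b -> lex_lt (c + a)%MM (c + b)%MM.
Proof. by rewrite ![(c + _)%MM]addmC; exact: lex_addr. Qed.

End S1.

Section S2.
Set Implicit Arguments. Unset Strict Implicit. Unset Printing Implicit Defensive.
Local Open Scope ring_scope.

Definition Lb (K : fieldType) n (p : {mpoly K[nvars n]}) a :=
  forall m, m \in msupp p -> m = a \/ lex_lt m a.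
Definition Sb (K : fieldType) n (p : {mpoly K[nvars n]}) a :=
  forall m, m \in msupp p -> lex_lt m a.
Definition lead (K : fieldType) n (p : {mpoly K[nvars n]}) a c :=
  [/\ p@_a = c, c != 0 & forall m, m \in msupp p -> m != a -> lex_lt m a].

Lemma msuppM_dec (K : fieldType) n (p q : {mpoly K[nvars n]}) m :
  m \in msupp (p * q) -> exists m1 m2, [/\ m1 \in msupp p, m2 \in msupp q & m = (m1 + m2)%MM].
Proof.
move/msuppM_le/allpairsP => [[m1 m2] /= [h1 h2 ->]]; by exists m1, m2.
Qed.

Lemma LbM (K : fieldType) n (p q : {mpoly K[nvars n]}) a b :
  Lb p a -> Lb q b -> Lb (p * q) (a + b)%MM.
Proof.
move=> hp hq m /msuppM_dec [m1 [m2 [h1 h2 ->]]].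
case: (hp _ h1) => [->|l1]; case: (hq _ h2) => [->|l2]; [by left| | |]; right.
- exact: lex_addl.
- exact: lex_addr.
- apply: lex_trans (lex_addr _ l1) (lex_addl _ l2).
Qed.

Lemma SbM (K : fieldType) n (p q : {mpoly K[nvars n]}) a b :
  Sb p a -> Lb q b -> Sb (p * q) (a + b)%MM.
Proof.
move=> hp hq m /msuppM_dec [m1 [m2 [h1 h2 ->]]].
have l1 := hp _ h1; case: (hq _ h2) => [->|l2].
- exact: lex_addr.
- apply: lex_trans (lex_addr _ l1) (lex_addl _ l2).
Qed.

Lemma SbM' (K : fieldType) n (p q : {mpoly K[nvars n]}) a b :
  Lb p a -> Sb q b -> Sb (p * q) (a + b)%MM.
Proof. by move=> hp hq; rewrite mulrC addmC; exact: SbM. Qed.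

Lemma Sb_coef (K : fieldType) n (p : {mpoly K[nvars n]}) a : Sb p a -> p@_a = 0.
Proof.
move=> h; apply/eqP; apply: contraT; rewrite -mcoeff_msupp => /h.
by move/lex_irr.
Qed.

Lemma LbX (K : fieldType) n (c : K) a : Lb (c *: 'X_[a] : {mpoly K[nvars n]}) a.
Proof.
move=> m; rewrite mcoeff_msupp mcoeffZ mcoeffX.
by case: (eqVneq a m) => [->|_]; [left|rewrite mulr0 eqxx].
Qed.

Lemma lead_Lb (K : fieldType) n (p : {mpoly K[nvars n]}) a c : lead p a c -> Lb p a.
Proof.
case=> _ _ h m hm; case: (eqVneq m a) => [->|ne]; [by left|right; exact: h].
Qed.

Lemma Sb_Lb (K : fieldType) n (p : {mpoly K[nvars n]}) a : Sb p a -> Lb p a.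
Proof. by move=> h m hm; right; exact: h. Qed.

Lemma lead_rest (K : fieldType) n (p : {mpoly K[nvars n]}) a c :
  lead p a c -> Sb (p - c *: 'X_[a]) a.
Proof.
case=> e nz h m; rewrite mcoeff_msupp mcoeffB mcoeffZ mcoeffX.
case: (eqVneq a m) => [<-|ne]; first by rewrite e mulr1 subrr eqxx.
rewrite mulr0 subr0 -mcoeff_msupp => hm; apply: h => //; by rewrite eq_sym.
Qed.

Lemma lead_mul (K : fieldType) n (p q : {mpoly K[nvars n]}) a b c d :
  lead p a c -> lead q b d -> lead (p * q) (a + b)%MM (c * d).
Proof.
move=> hp hq; split.
- have [p1 ep hp1] : exists2 p1, p = c *: 'X_[a] + p1 & Sb p1 a.
    by exists (p - c *: 'X_[a]); [rewrite addrC subrK | exact: lead_rest hp].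
  have [q1 eq hq1] : exists2 q1, q = d *: 'X_[b] + q1 & Sb q1 b.
    by exists (q - d *: 'X_[b]); [rewrite addrC subrK | exact: lead_rest hq].
  rewrite ep eq mulrDl !mulrDr !mcoeffD.
  rewrite (Sb_coef (SbM' (@LbX _ _ _ _) hq1)).
  rewrite (Sb_coef (SbM hp1 (@LbX _ _ _ _))).
  rewrite (Sb_coef (SbM hp1 (Sb_Lb hq1))) ?addr0.
  by rewrite -scalerAl -scalerAr scalerA -mpolyXD mcoeffZ mcoeffX eqxx mulr1.
- by case: hp => _ nz _; case: hq => _ nz' _; rewrite mulf_neq0.
- move=> m hm ne; case: (LbM (lead_Lb hp) (lead_Lb hq) hm) => [e|//].
  by rewrite e eqxx in ne.
Qed.

End S2.

Section S3.
Set Implicit Arguments. Unset Strict Implicit. Unset Printing Implicit Defensive.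
Local Open Scope ring_scope.

Lemma lead1 (K : fieldType) n : lead (1 : {mpoly K[nvars n]}) 0%MM 1.
Proof.
split; first by rewrite mcoeff1 eqxx.
  exact: oner_neq0.
move=> m; rewrite mcoeff_msupp mcoeff1; case: (eqVneq m 0%MM) => [-> _|ne].
  by [].
by rewrite /= eqxx.
Qed.

Lemma lead_prod (K : fieldType) n (I : Type) (r : seq I) (F : I -> {mpoly K[nvars n]}) A C :
  (forall i, lead (F i) (A i) (C i)) ->
  lead (\prod_(i <- r) F i) (\big[+%MM/0%MM]_(i <- r) A i) (\prod_(i <- r) C i).
Proof.
move=> h; elim: r => [|x r ih]; first by rewrite !big_nil; exact: lead1.
rewrite !big_cons; exact: lead_mul.
Qed.

Lemma lead_exp (K : fieldType) n (p : {mpoly K[nvars n]}) a c j :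
  lead p a c -> lead (p ^+ j) (a *+ j)%MM (c ^+ j).
Proof.
move=> h; elim: j => [|j ih]; first by rewrite !expr0 mulm0n; exact: lead1.
rewrite !exprS mulmS; exact: lead_mul.
Qed.

Lemma lead_sum (K : fieldType) n (I : finType) (F : I -> K) (M : I -> 'X_{1..nvars n}) i0 :
  F i0 != 0 -> (forall i, i != i0 -> lex_lt (M i) (M i0)) ->
  lead (\sum_i F i *: 'X_[M i] : {mpoly K[nvars n]}) (M i0) (F i0).
Proof.
move=> nz hlt.
have coefE m : (\sum_i F i *: 'X_[M i] : {mpoly K[nvars n]})@_m = \sum_i F i * (M i == m)%:R.
  by rewrite raddf_sum /=; apply: eq_bigr => i _; rewrite mcoeffZ mcoeffX.
split => //.
  rewrite coefE (bigD1 i0) //= eqxx mulr1 big1 ?addr0 // => i hi.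
  case: eqP => [e|_]; last by rewrite mulr0.
  by have := hlt i hi; rewrite e => /lex_irr.
move=> m; rewrite mcoeff_msupp coefE => hm ne.
have [i _ hi] : exists2 i, true & M i == m.
  apply/exists_inP; apply: contraNT hm; rewrite negb_exists_in => /forall_inP hh.
  by apply/eqP; apply: big1 => i _; rewrite (negbTE (hh i isT)) mulr0.
rewrite -(eqP hi); apply: hlt; apply: contraNneq ne => e; by rewrite -(eqP hi) e.
Qed.

End S3.

Section S4.
Set Implicit Arguments. Unset Strict Implicit. Unset Printing Implicit Defensive.
Local Open Scope ring_scope.

Lemma sym_pair_val1 n (i j : 'I_n) : ((val (sym_pair i j)).1 : nat) = minn i j.
Proof. rewrite /sym_pair; destruct (boolP (i <= j)%N) as [h|h] => /=; lia. Qed.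
Lemma sym_pair_val2 n (i j : 'I_n) : ((val (sym_pair i j)).2 : nat) = maxn i j.
Proof. rewrite /sym_pair; destruct (boolP (i <= j)%N) as [h|h] => /=; lia. Qed.

Definition vr n (k : 'I_n) (r c : 'I_k.+1) : sidx n :=
  sym_pair (Ordinal (corner_row_aux r)) (widen_ord (ltn_ord k) c).

Definition mon n (k : 'I_n) (s : 'S_(k.+1)) : 'X_{1..nvars n} :=
  (\big[+%MM/0%MM]_(r < k.+1) U_(enum_rank (vr r (s r))))%MM.

Lemma vr1 n (k : 'I_n) (r c : 'I_k.+1) : ((val (vr r c)).1 : nat) = minn (n.-1 - k + r) c.
Proof. by rewrite /vr sym_pair_val1. Qed.
Lemma vr2 n (k : 'I_n) (r c : 'I_k.+1) : ((val (vr r c)).2 : nat) = maxn (n.-1 - k + r) c.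
Proof. by rewrite /vr sym_pair_val2. Qed.

Lemma expo_mon n (k : 'I_n) (s : 'S_(k.+1)) t :
  expo (mon s) t = (\sum_(r < k.+1) (vr r (s r) == t))%N.
Proof.
rewrite /expo /mon mnm_sumE; apply: eq_bigr => r _.
by rewrite mnm1E (inj_eq enum_rank_inj).
Qed.

Lemma corner_minorE (K : fieldType) n (k : 'I_n) :
  corner_minor K k = \sum_(s : 'S_(k.+1)) ((-1) ^+ s : K) *: 'X_[mon s].
Proof.
rewrite /corner_minor /determinant; apply: eq_bigr => s _.
rewrite /mon (big_morph (fun m => 'X_[m] : {mpoly K[nvars n]}) (@mpolyXD _ _) (@mpolyX0 _ _)).
have -> : \prod_(i < k.+1) (\matrix_(r, c) genSym K n (Ordinal (corner_row_aux r))
                 (widen_ord (ltn_ord k) c)) i (s i) = \prod_(r < k.+1) 'X_(enum_rank (vr r (s r))).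
  by apply: eq_bigr => r _; rewrite !mxE.
by rewrite -mul_mpolyC rmorph_sign.
Qed.

End S4.

Section S5.
Set Implicit Arguments. Unset Strict Implicit. Unset Printing Implicit Defensive.

Lemma mon_lt n (k : 'I_n) (s : 'S_(k.+1)) : s != 1%g -> lex_lt (mon s) (@mon n k 1%g).
Proof.
move=> s1.
have [r1 hr1] : exists r1, s r1 != r1.
  apply/existsP; apply: contraNT s1; rewrite negb_exists => /forallP h.
  by apply/eqP/permP => r; rewrite perm1; apply/eqP; have := h r; rewrite negbK.
case: (arg_minnP (P := fun r => s r != r) (fun r : 'I_k.+1 => val r) hr1) => r0 h0 hmin.
have hfix (r : 'I_k.+1) : (r < r0)%N -> s r = r.
  move=> hr; apply/eqP; apply: contraTT hr => /hmin; by rewrite -leqNgt.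
have hbig (r : 'I_k.+1) : (r0 <= r)%N -> (r0 <= s r)%N.
  move=> hr; rewrite leqNgt; apply/negP => hlt.
  have e := hfix _ hlt; have e2 : s r = r by apply: (@perm_inj _ s).
  by move: hlt; rewrite e2 ltnNge hr.
have hgt : (r0 < s r0)%N.
  have := hbig r0 (leqnn _); rewrite leq_eqVlt => /orP [/eqP e|//].
  by move: h0; rewrite -val_eqE /= -e eqxx.
have hsr (r : 'I_k.+1) : (r : nat) = r0 -> (r0 < s r)%N.
  by move=> e; have -> : r = r0 by apply: val_inj.
exists (vr r0 r0); split.
  move=> u hu; rewrite !expo_mon; apply: eq_bigr => r _; rewrite perm1.
  case: (ltnP r r0) => hr; first by rewrite hfix.
  have h1 := hbig r hr; have h2 := hsr r.
  move: hu; rewrite /pair_prec !vr1 !vr2 !sidx_eqE !vr1 !vr2.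
  have := svalP u; move: (sval u) => [u1 u2] /= hu12.
  have := ltn_ord (s r); have := ltn_ord r0; have := ltn_ord r; have := ltn_ord k.
  lia.
rewrite !expo_mon big1 => [|r _]; last first.
  rewrite sidx_eqE !vr1 !vr2.
  case: (ltnP r r0) => hr; first by rewrite hfix //; lia.
  have h1 := hbig r hr; have h2 := hsr r; lia.
rewrite (bigD1 r0) //= perm1 eqxx; lia.
Qed.

End S5.

Section S6.
Set Implicit Arguments. Unset Strict Implicit. Unset Printing Implicit Defensive.
Local Open Scope ring_scope.

Lemma lead_corner (K : fieldType) n (k : 'I_n) : lead (corner_minor K k) (@mon n k 1%g) 1.
Proof.
rewrite corner_minorE.
have := @lead_sum K n _ (fun s : 'S_(k.+1) => ((-1) ^+ s : K)) (@mon n k) 1%g.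
rewrite odd_perm1 expr0; apply; first exact: oner_neq0.
by move=> s hs; apply: mon_lt.
Qed.

Definition Mtot n : 'X_{1..nvars n} := (\big[+%MM/0%MM]_(k < n) @mon n k 1%g)%MM.

Lemma lead_frakD (K : fieldType) n : lead (frakD K n) (Mtot n) 1.
Proof.
have := @lead_prod K n _ (index_enum (ordinal n)) (@corner_minor K n) (fun k => @mon n k 1%g) (fun _ => 1).
rewrite big1_eq; apply=> k; exact: lead_corner.
Qed.

Lemma sum_eq1 (I : finType) (j : I) : (\sum_(i : I) ((i == j) : nat))%N = 1%N.
Proof. by rewrite (bigD1 j) //= eqxx big1 // => i /negbTE ->. Qed.

Lemma Mtot1 n (i : 'I_(nvars n)) : Mtot n i = 1%N.
Proof.
rewrite /Mtot mnm_sumE.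
set t := enum_val i.
have ei : i = enum_rank t by rewrite enum_valK.
clearbody t.
have hab : ((sval t).1 <= (sval t).2)%N := svalP t.
have hb := ltn_ord (sval t).2.
have hk0 : (n.-1 - (sval t).2 + (sval t).1 < n)%N by lia.
rewrite (bigD1 (Ordinal hk0)) // big1 ?addn0 => [|k hk]; last first.
  rewrite /mon mnm_sumE; apply: big1 => r _; rewrite perm1 mnm1E ei (inj_eq enum_rank_inj).
  have -> // : (vr r r == t) = false.
  apply/negbTE; rewrite sidx_eqE vr1 vr2.
  move: hk; rewrite -val_eqE /=; have := ltn_ord r; have := ltn_ord k; lia.
have ha : ((sval t).1 < (Ordinal hk0).+1)%N by rewrite /=; lia.
rewrite /mon mnm_sumE (bigD1 (Ordinal ha)) // big1 ?addn0 => [|r hr]; last first.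
  rewrite perm1 mnm1E ei (inj_eq enum_rank_inj).
  have -> // : (@vr n (Ordinal hk0) r r == t) = false.
  apply/negbTE; rewrite sidx_eqE vr1 vr2.
  move: hr; rewrite -val_eqE /=; have := ltn_ord r; lia.
rewrite perm1 mnm1E ei (inj_eq enum_rank_inj).
have -> // : (@vr n (Ordinal hk0) (Ordinal ha) (Ordinal ha) == t) = true.
rewrite sidx_eqE vr1 vr2 /=.
have e : (n.-1 - (n.-1 - (sval t).2 + (sval t).1) + (sval t).1 = (sval t).2)%N by lia.
rewrite e; apply/andP; split; apply/eqP; [exact/minn_idPr | exact/maxn_idPl].
Qed.

Lemma Mtot_eq n : Mtot n = (\big[+%MM/0%MM]_(t : sidx n) U_(enum_rank t))%MM.
Proof.
apply/mnmP => i; rewrite Mtot1 mnm_sumE.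
rewrite -(sum_eq1 (enum_val i)); apply: eq_bigr => t _.
rewrite mnm1E; congr nat_of_bool.
case: eqP => [->|ne]; first by rewrite enum_valK eqxx.
by apply/esym/eqP => e; apply: ne; rewrite -e enum_rankK.
Qed.

Lemma prod_varS (K : fieldType) n :
  \prod_(t : sidx n) varS K t = 'X_[Mtot n].
Proof.
rewrite Mtot_eq (big_morph (fun m => 'X_[m] : {mpoly K[nvars n]}) (@mpolyXD _ _) (@mpolyX0 _ _)).
by [].
Qed.

End S6.

Section S7.
Set Implicit Arguments. Unset Strict Implicit. Unset Printing Implicit Defensive.
Local Open Scope ring_scope.

Definition Pp (K : fieldType) N (p : nat) (f : {mpoly K[N]}) :=
  forall m, m \in msupp f -> exists i, (p <= m i)%N.

Lemma Pp0 (K : fieldType) N p : Pp p (0 : {mpoly K[N]}).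
Proof. by move=> m; rewrite mcoeff_msupp mcoeff0 eqxx. Qed.

Lemma PpD (K : fieldType) N p (f g : {mpoly K[N]}) : Pp p f -> Pp p g -> Pp p (f + g).
Proof.
move=> hf hg m /msuppD_le; rewrite mem_cat => /orP [/hf|/hg] //.
Qed.

Lemma PpM (K : fieldType) N p (f g : {mpoly K[N]}) : Pp p g -> Pp p (f * g).
Proof.
move=> hg m /msuppM_le/allpairsP [[m1 m2] /= [h1 h2 ->]].
have [i hi] := hg _ h2; exists i; rewrite mnmDE; exact: leq_trans hi (leq_addl _ _).
Qed.

Lemma Ppsum (K : fieldType) N p (I : Type) (r : seq I) (F : I -> {mpoly K[N]}) :
  (forall i, Pp p (F i)) -> Pp p (\sum_(i <- r) F i).
Proof.
move=> h; elim: r => [|x r ih]; first by rewrite big_nil; exact: Pp0.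
rewrite big_cons; exact: PpD.
Qed.

Lemma PpX (K : fieldType) N p (i : 'I_N) : Pp p ('X_i ^+ p : {mpoly K[N]}).
Proof.
move=> m; rewrite mpolyXn msuppX mem_seq1 => /eqP ->; exists i.
by rewrite mulmnE mnm1E eqxx mul1n.
Qed.

Lemma pchar_mpoly (K : fieldType) N p : p \in [pchar K] -> p \in [pchar {mpoly K[N]}].
Proof. move=> h; exact: (rmorph_pchar (@mpolyC N K) h). Qed.

Lemma Pp_frob (K : fieldType) n p (f : {mpoly K[nvars n]}) :
  p \in [pchar K] -> frob_power (max_ideal K n) p f -> Pp p f.
Proof.
move=> hp [k [a [g [hg ->]]]].
rewrite -big_enum /=; apply: Ppsum => i; apply: PpM.
have [h [[k' [b [v [hv ->]]]] ->]] := hg i.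
have hp' := pchar_mpoly (nvars n) hp.
rewrite -(pFrobenius_autE hp') raddf_sum -big_enum /=; apply: Ppsum => j.
rewrite pFrobenius_autE exprMn; apply: PpM.
have [t ->] := hv j; exact: PpX.
Qed.

End S7.

Unset Implicit Arguments.
Set Strict Implicit.
Local Open Scope ring_scope.

Theorem mainTheorem3 (K : fieldType) (n : nat) :
  is_lex_leading_term (frakD K n) (\prod_(t : sidx n) varS K t) /\
  (forall p : nat, p \in [pchar K] ->
     ~ frob_power (max_ideal K n) p (frakD K n ^+ p.-1)).
Proof.
have [e1 nz hlt] := lead_frakD K n.
split.
  exists (Mtot n); split.
  - by rewrite mcoeff_msupp e1.
  - exact: hlt.
  - by rewrite e1 scale1r prod_varS.
move=> p hp hf.
have [e2 nz2 _] := lead_exp p.-1 (lead_frakD K n).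
have hP := Pp_frob hp hf.
have hm : (Mtot n *+ p.-1)%MM \in msupp (frakD K n ^+ p.-1) by rewrite mcoeff_msupp e2.
have [i hi] := hP _ hm.
move: hi; rewrite mulmnE Mtot1 mul1n.
have := pcharf_prime hp => /prime_gt0; lia.
Qed.
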